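(* Consider the problem and algorithm AC2CD described in the context, let $\{x^k\}$ be a sequence produced by AC2CD, and assume $\lim_{k\to\infty}x^k=x^*$. Let $D^*_{\max}=\max_{i=1,\dots,n}D_i(x^* )$ (which is positive) and let $k_j$ be the first outer iteration such that \[ \|x^k-x^*\|_\infty<\frac{\tau}{\tau+1}D^*_{\max}\quad\text{for all } k\ge k_j. \] Then for all $k\ge k_j$, $j(k)\notin \mathcal A(x^* )$, where $\mathcal A(x^* )=\{i: x^*_i=l_i\}\cup\{i: x^*_i=u_i\}$.
   Context: Problem: minimize $f(x)$ subject to $e^T x = b$ and $l_i \le x_i \le u_i$ ($i=1,\dots,n$), where $n\ge 2$, $e$ is the all-ones vector, $b\in\mathbb{R}$, $l_i\in\mathbb{R}\cup\{-\infty\}$, $u_i\in\mathbb{R}\cup\{+\infty\}$, $l_i<u_i$, and $f:\mathbb{R}^n\to\mathbb{R}$ is continuously differentiable with $\nabla f$ Lipschitz continuous on $\mathbb{R}^n$. $\mathcal F$ is the feasible set, $e_i$ the $i$th unit vector. For $x\in\mathcal F$, $D_h(x)=\min\{x_h-l_h,u_h-x_h\}$. Algorithm AC2CD with parameters $\tau\in(0,1]$, $\gamma,\delta\in(0,1)$, $0<A_l\le A_u<\infty$ and starting point $x^0\in\mathcal F$: for $k=0,1,2,\dots$: let $D^k=\max_h D_h(x^k)$; choose $j(k)$ with $D_{j(k)}(x^k)\ge\tau D^k$; choose a permutation $(p^k_1,\dots,p^k_n)$ of $\{1,\dots,n\}$; set $z^{k,1}=x^k$; for $i=1,\dots,n$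 (inner iteration $(k,i)$): $g^{k,i}=\nabla_{j(k)}f(z^{k,i})-\nabla_{p^k_i}f(z^{k,i})$, $d^{k,i}=g^{k,i}(e_{p^k_i}-e_{j(k)})$; $\bar\alpha^{k,i}=\min\{u_{p^k_i}-z^{k,i}_{p^k_i},z^{k,i}_{j(k)}-l_{j(k)}\}/g^{k,i}$ if $g^{k,i}>0$, $=\min\{z^{k,i}_{p^k_i}-l_{p^k_i},u_{j(k)}-z^{k,i}_{j(k)}\}/|g^{k,i}|$ if $g^{k,i}<0$, $=0$ if $g^{k,i}=0$; choose $A^{k,i}\in[A_l,A_u]$, set $\Delta^{k,i}=\min\{\bar\alpha^{k,i},A^{k,i}\}$; starting from $\alpha=\Delta^{k,i}$, while $f(z^{k,i}+\alpha d^{k,i})>f(z^{k,i})+\gamma\alpha\nabla f(z^{k,i})^Td^{k,i}$ replace $\alpha$ by $\delta\alpha$; $\alpha^{k,i}$ is the final $\alpha$ and $z^{k,i+1}=z^{k,i}+\alpha^{k,i}d^{k,i}$. Then $x^{k+1}=z^{k,n+1}$. Standing assumptions: $\mathcal L_0=\{x\in\mathcal F: f(x)\le f(x^0)\}$ is nonempty and compact, and every $x\in\mathcal L_0$ has some index $i$ with $l_i<x_i<u_i$. *)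

(* Defs.v *)
(* R : realType, vectors are row vectors 'rV[R]_n,
   bounds l_i, u_i are extended reals (\bar R) to allow -oo / +oo. *)
From HB Require Import structures.
From mathcomp Require Import all_boot all_order all_algebra all_fingroup.
From mathcomp Require Import all_classical all_reals all_analysis.
Set Implicit Arguments. Unset Strict Implicit. Unset Printing Implicit Defensive.
Import Order.TTheory GRing.Theory Num.Theory.
Import numFieldNormedType.Exports.
Local Open Scope classical_set_scope.
Local Open Scope ring_scope.

Definition evec (R : realType) (n : nat) (i : 'I_n) : 'rV[R]_n := delta_mx 0 i.

Definition pgrad (R : realType) (n : nat) (f : 'rV[R]_n -> R) (x : 'rV[R]_n)
  (i : 'I_n) : R := 'D_(evec R i) f x.

Definition gradv (R : realType) (n : nat) (f : 'rV[R]_n -> R) (x : 'rV[R]_n)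
  : 'rV[R]_n := \row_i pgrad f x i.

Definition gdot (R : realType) (n : nat) (f : 'rV[R]_n -> R) (x d : 'rV[R]_n) : R :=
  \sum_i gradv f x 0 i * d 0 i.

Definition feasible (R : realType) (n : nat) (l u : 'I_n -> \bar R) (b : R)
  (x : 'rV[R]_n) : Prop :=
  \sum_i x 0 i = b /\ (forall i, (l i <= (x 0 i)%:E)%E /\ ((x 0 i)%:E <= u i)%E).

Definition Dh (R : realType) (n : nat) (l u : 'I_n -> \bar R) (x : 'rV[R]_n)
  (h : 'I_n) : \bar R :=
  mine ((x 0 h)%:E - l h)%E (u h - (x 0 h)%:E)%E.

Definition Dmax (R : realType) (n : nat) (l u : 'I_n -> \bar R) (x : 'rV[R]_n)
  : \bar R := (\big[maxe/-oo]_h Dh l u x h)%E.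

Definition active (R : realType) (n : nat) (l u : 'I_n -> \bar R) (x : 'rV[R]_n)
  : set 'I_n := [set i | (x 0 i)%:E = l i \/ (x 0 i)%:E = u i].

(* maximal feasible step bar alpha along d = g (e_p - e_j) *)
Definition alphabar (R : realType) (n : nat) (l u : 'I_n -> \bar R)
  (z : 'rV[R]_n) (p j : 'I_n) (g : R) : \bar R :=
  if 0 < g then (mine (u p - (z 0 p)%:E) ((z 0 j)%:E - l j) * (g^-1)%:E)%E
  else if g < 0 then (mine ((z 0 p)%:E - l p) (u j - (z 0 j)%:E) * (`|g|^-1)%:E)%E
  else 0%E.

Definition armijo (R : realType) (n : nat) (f : 'rV[R]_n -> R) (gamma : R)
  (z d : 'rV[R]_n) (a : R) : Prop :=
  f (z + a *: d) <= f z + gamma * a * gdot f z d.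

(* One inner iteration (k,i) of AC2CD: from zc to znext, with working index j,
   index p = p^k_i, and chosen A = A^{k,i}.  The line search starts from
   Delta = min{bar alpha, A} and multiplies by delta until Armijo holds, so the
   accepted step is Delta * delta^m with m the least such exponent. *)
Definition inner_step (R : realType) (n : nat) (f : 'rV[R]_n -> R)
  (l u : 'I_n -> \bar R) (gamma delta Al Au : R) (j p : 'I_n) (A : R)
  (zc znext : 'rV[R]_n) : Prop :=
  let g := pgrad f zc j - pgrad f zc p in
  let d := g *: (evec R p - evec R j) in
  let Delta := fine (mine (alphabar l u zc p j g) A%:E) in
  Al <= A <= Au /\
  exists m : nat,
    armijo f gamma zc d (Delta * delta ^+ m) /\
    (forall m' : nat, (m' < m)%N -> not (armijo f gamma zc d (Delta * delta ^+ m'))) /\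
    znext = zc + (Delta * delta ^+ m) *: d.

(* x is a sequence of outer iterates produced by AC2CD from x0 with the given
   parameters, with working indices jsel k = j(k), permutations perm k,
   inner iterates z k i (z k 0 = z^{k,1}, ..., z k n = z^{k,n+1}) and
   trial steps Asel k i = A^{k,i+1}. *)
Definition AC2CD_run (R : realType) (n : nat) (f : 'rV[R]_n -> R)
  (l u : 'I_n -> \bar R) (tau gamma delta Al Au : R) (x0 : 'rV[R]_n)
  (x : nat -> 'rV[R]_n) (jsel : nat -> 'I_n) (perm : nat -> 'S_n)
  (z : nat -> nat -> 'rV[R]_n) (Asel : nat -> nat -> R) : Prop :=
  x 0%N = x0 /\
  (forall k, (Dh l u (x k) (jsel k) >= tau%:E * Dmax l u (x k))%E) /\
  (forall k, z k 0%N = x k) /\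
  (forall k, x k.+1 = z k n) /\
  (forall k (i : 'I_n),
      inner_step f l u gamma delta Al Au (jsel k) (perm k i) (Asel k i)
        (z k i) (z k i.+1)).

(* Main.v *)
Require Import Defs.
From HB Require Import structures.
From mathcomp Require Import all_boot all_order all_algebra all_fingroup.
From mathcomp Require Import all_classical all_reals all_analysis.
From mathcomp Require Import lra.
Import Order.TTheory GRing.Theory Num.Theory.
Import numFieldNormedType.Exports.
Local Open Scope classical_set_scope.
Local Open Scope ring_scope.

Lemma entry_le (R : realType) n (v : 'rV[R]_n) i : `|v 0 i| <= `|v|.
Proof.
have /mapP[j Hj ->] : `|v ord0 i| \in [seq `|v x.1 x.2| | x : 'I_1 * 'I_n].
  by apply/mapP; exists (ord0, i) => //=; rewrite mem_enum.
by rewrite [leRHS]/Num.Def.normr /= mx_normrE; apply/bigmax_geP; right => /=; exists j.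
Qed.

Lemma Dh_le_Dmax (R : realType) n (l u : 'I_n -> \bar R) x h :
  (Dh l u x h <= Dmax l u x)%E.
Proof. by rewrite /Dmax (bigD1 h) //= le_max lexx. Qed.

Lemma Dmax_le (R : realType) n (l u : 'I_n -> \bar R) x c :
  (forall h, Dh l u x h <= c)%E -> (Dmax l u x <= c)%E.
Proof.
move=> H; rewrite /Dmax; elim/big_ind: _ => //; first exact: leNye.
by move=> a b ha hb; rewrite ge_max ha hb.
Qed.

Lemma min_shift (R : realType) (A B A' B' : \bar R) (e : R) :
  (A' <= A + e%:E)%E -> (B' <= B + e%:E)%E -> (mine A' B' <= mine A B + e%:E)%E.
Proof.
move=> h1 h2; rewrite /Order.min; case: ifPn => h3; case: ifPn => h4.
- exact: h1.
- exact: le_trans (ltW h3) h2.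
- by rewrite -leNgt in h3; exact: le_trans h3 h1.
- exact: h2.
Qed.

Lemma Dh_shift (R : realType) n (l u : 'I_n -> \bar R) (x y : 'rV[R]_n) h (e : R) :
  (forall i, l i <> +oo%E) -> (forall i, u i <> -oo%E) ->
  `|x 0 h - y 0 h| <= e ->
  (Dh l u x h <= Dh l u y h + e%:E)%E.
Proof.
move=> hl hu he.
move: he; rewrite ler_norml => /andP[he1 he2].
rewrite /Dh; apply: min_shift.
- move: (hl h); case El: (l h) => [lr| |] // _ /=.
  rewrite -!EFinB -EFinD lee_fin; lra.
- move: (hu h); case Eu: (u h) => [ur| |] // _ /=.
  rewrite -!EFinB -EFinD lee_fin; lra.
Qed.
Arguments entry_le {R n}.
Arguments Dh_shift {R n l u x y h e}.
Arguments Dmax_le {R n l u x c}.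
Arguments Dh_le_Dmax {R n l u x h}.

Theorem proposition1 (R : realType) (n : nat) (f : 'rV[R]_n -> R)
  (l u : 'I_n -> \bar R) (b : R) (tau gamma delta Al Au : R) (x0 : 'rV[R]_n)
  (x : nat -> 'rV[R]_n) (jsel : nat -> 'I_n) (perm : nat -> 'S_n)
  (z : nat -> nat -> 'rV[R]_n) (Asel : nat -> nat -> R)
  (xstar : 'rV[R]_n) (kj : nat) :
  (* problem data *)
  (2 <= n)%N ->
  (forall i, l i <> +oo%E) -> (forall i, u i <> -oo%E) ->
  (forall i, (l i < u i)%E) ->
  (forall x, differentiable f x) ->
  (forall i, continuous (fun x => pgrad f x i)) ->
  (exists L : R, forall x y, `|gradv f x - gradv f y| <= L * `|x - y|) ->
  (* parameters and starting point *)
  0 < tau <= 1 -> 0 < gamma < 1 -> 0 < delta < 1 -> 0 < Al -> Al <= Au ->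
  feasible l u b x0 ->
  (* standing assumptions *)
  compact [set y | feasible l u b y /\ f y <= f x0] ->
  (forall y, feasible l u b y -> f y <= f x0 ->
     exists i, (l i < (y 0 i)%:E)%E /\ ((y 0 i)%:E < u i)%E) ->
  (* x is produced by AC2CD and converges to xstar *)
  AC2CD_run f l u tau gamma delta Al Au x0 x jsel perm z Asel ->
  x @ \oo --> xstar ->
  (* kj is the first index from which on ||x^k - x*||_oo < tau/(tau+1) D*_max *)
  (forall k, (kj <= k)%N ->
     ((`|x k - xstar|)%:E < (tau / (tau + 1))%:E * Dmax l u xstar)%E) ->
  (forall k', (k' < kj)%N -> exists k, (k' <= k)%N /\
     ~ ((`|x k - xstar|)%:E < (tau / (tau + 1))%:E * Dmax l u xstar)%E) ->
  forall k, (kj <= k)%N -> ~ active l u xstar (jsel k).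
Proof.
move=> _ hl hu _ _ _ _ /andP[tau0 _] _ _ _ _ _ _ _ Hrun _ Hkj _ k Hk Hact.
have Hsel := Hrun.2.1 k.
have H := Hkj k Hk.
set e := `|x k - xstar| in H.
set j := jsel k in Hsel Hact.
have ent : forall h, `|x k 0 h - xstar 0 h| <= e.
  by move=> h; have := entry_le (x k - xstar) h; rewrite !mxE.
have D1 : (Dh l u (x k) j <= e%:E)%E.
  have := ent j; rewrite ler_norml => /andP[e1 e2].
  rewrite /Dh; case: Hact => [hl'|hu'].
  - apply: le_trans (_ : ((x k 0 j)%:E - l j <= e%:E)%E); first by rewrite ge_min lexx.
    by rewrite -hl' -EFinB lee_fin.
  - apply: le_trans (_ : (u j - (x k 0 j)%:E <= e%:E)%E); first by rewrite ge_min lexx orbT.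
    rewrite -hu' -EFinB lee_fin; lra.
have D2 : (Dmax l u xstar <= Dmax l u (x k) + e%:E)%E.
  apply: Dmax_le => h; apply: le_trans (Dh_shift hl hu _) _.
    by rewrite distrC; exact: ent.
  by rewrite leeD2r // Dh_le_Dmax.
set c := tau / (tau + 1) in H.
have c0 : 0 < c by rewrite /c divr_gt0 // ltr_wpDr.
have hc : c * (tau + 1) = tau by rewrite /c mulfVK // gt_eqF // ltr_wpDr.
have e0 : 0 <= e by rewrite /e normr_ge0.
move: Hsel D2; case: (Dmax l u (x k)) => [r| |] Hsel D2.
- have h1 : tau * r <= e.
    by rewrite -lee_fin EFinM; exact: le_trans Hsel D1.
  have h2 : ((c%:E * Dmax l u xstar) <= (c * (r + e))%:E)%E.
    rewrite (EFinM c); apply: (@lee_wpmul2l _ c%:E); first by rewrite lee_fin ltW.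
    by rewrite EFinD.
  have := lt_le_trans H h2; rewrite lte_fin => h3.
  nra.
- move: Hsel; rewrite gt0_muley ?lte_fin // => Hsel.
  have := le_trans Hsel D1; by rewrite leye_eq.
- move: D2; rewrite /= leeNy_eq => /eqP D2.
  by move: H; rewrite D2 gt0_muleNy ?lte_fin.
Qed.
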